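(* Fix $k>0$ and $\eta\in\mathbb{R}^{n-r}$ with $\mathrm{int}(\Omega_\eta)\ne\emptyset$ such that $\partial\Omega_\eta$ contains no zero of $g_\eta(k,\cdot)$, and suppose that $g_\eta(k,\xi)=0$, $\xi\in\Omega_\eta$, has more than one solution, all of them regular. Then $a_r(v,x)$, written as a polynomial in $v_1,\dots,v_m,x_1^{-1},\dots,x_n^{-1}$ with like monomials collected, has at least one monomial with a negative coefficient.
   Context: Mass-action network with species $A_1,\dots,A_n$, reactions $\sum_{i}\alpha_{ij}A_i\xrightarrow{k_j}\sum_i\beta_{ij}A_i$ ($j=1,\dots,m$), nonnegative integer coefficients, rate constants $k>0$, rate functions $v_j(k,x)=k_j\prod_i x_i^{\alpha_{ij}}$, stoichiometric matrix $N_{ij}=\beta_{ij}-\alpha_{ij}$ of rank $r$, model $\dot x=Nv(k,x)$. Standing assumption: some $\lambda\in\mathbb{R}^n_{>0}$ satisfies $\lambda^TN=0$. $S\in\mathbb{R}^{n\times r}$: columns an orthonormal basis of $\mathrm{im}(N)$; $Z\in\mathbb{R}^{n\times(n-r)}$: columns an orthonormal basis of $\ker(N^T)$. $g_\eta(k,\xi)=S^TNv(k,S\xi+Z\eta)$; $\Omega_\eta=\{\xi\in\mathbb{R}^r: S\xi+Z\eta\ge0\}$, $\mathrm{int}(\Omega_\eta)=\{\xi: S\xi+Z\eta>0\}$, $\partial\Omega_\eta=\Omega_\eta\setminus\mathrm{int}(\Omega_\eta)$. $J(v,x)$ is the $n\times n$ matrix with $J_{il}=\sum_j N_{ij}\alpha_{lj}v_j/x_l$;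 it is assumed that $\mathrm{im}(J(v,x))=\mathrm{im}(N)$; $a_r(v,x)$ is the sum of all principal minors of order $r$ of $-J(v,x)$. A zero $\xi$ of $g_\eta(k,\cdot)$ is regular if $a_r(v(k,x),x)\ne0$ at $x=S\xi+Z\eta$. *)

(* Defs.v *)
(* Mass-action networks; real numbers modelled by an
   arbitrary real closed field R. *)
From HB Require Import structures.
From mathcomp Require Import all_boot all_order all_algebra all_fingroup.
Set Implicit Arguments. Unset Strict Implicit. Unset Printing Implicit Defensive.
Import Order.TTheory GRing.Theory Num.Theory.
Local Open Scope ring_scope.

Section Network.
Variables (R : rcfType) (n m : nat).
Variables (alpha beta : 'M[nat]_(n, m)).

Definition stoich : 'M[R]_(n, m) :=
  \matrix_(i, j) ((beta i j)%:R - (alpha i j)%:R).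

Definition rates (k : 'cV[R]_m) (x : 'cV[R]_n) : 'cV[R]_m :=
  \col_j (k j 0 * \prod_(i < n) (x i 0) ^+ (alpha i j)).

Definition jacJ (v : 'cV[R]_m) (x : 'cV[R]_n) : 'M[R]_n :=
  \matrix_(i, l) \sum_(j < m) stoich i j * (alpha l j)%:R * v j 0 / x l 0.

Definition principal_minor (A : 'M[R]_n) (I : {set 'I_n}) : R :=
  \det (mxsub (fun a : 'I_#|I| => enum_val a) (fun a : 'I_#|I| => enum_val a) A).

Definition a_coef (s : nat) (v : 'cV[R]_m) (x : 'cV[R]_n) : R :=
  \sum_(I : {set 'I_n} | #|I| == s) principal_minor (- jacJ v x) I.

Definition pos_vec p (u : 'cV[R]_p) : Prop := forall i, 0 < u i 0.
Definition nneg_vec p (u : 'cV[R]_p) : Prop := forall i, 0 <= u i 0.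

End Network.

Section Expansion.
Variables (n m : nat) (alpha beta : 'M[nat]_(n, m)).

Definition stoichZ (i : 'I_n) (j : 'I_m) : int := (beta i j)%:Z - (alpha i j)%:Z.

(* a monomial v^e * (x^-1)^d, encoded by its exponent vectors (e, d) *)
Definition monomial := ({ffun 'I_m -> nat} * {ffun 'I_n -> nat})%type.

(* Expanding \det of the principal submatrix of -J on I by the Leibniz formula
   (sum over s) and each entry -J_{il} = sum_j (-N_ij alpha_lj) v_j x_l^-1
   (choice g a of j for row a) yields one term per (s, g): *)
Definition term_coef (I : {set 'I_n}) (s : 'S_#|I|) (g : {ffun 'I_#|I| -> 'I_m}) : int :=
  (-1) ^+ s * \prod_(a < #|I|)
     (- (stoichZ (enum_val a) (g a) * (alpha (enum_val (s a)) (g a))%:Z)).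

Definition term_mon (I : {set 'I_n}) (s : 'S_#|I|) (g : {ffun 'I_#|I| -> 'I_m}) : monomial :=
  ([ffun j => #|[set a | g a == j]|],
   [ffun l => #|[set a | enum_val (s a) == l]|]).

Definition a_poly_coef (s : nat) (mu : monomial) : int :=
  \sum_(I : {set 'I_n} | #|I| == s) \sum_(p : 'S_#|I|)
     \sum_(g : {ffun 'I_#|I| -> 'I_m})
        (if term_mon p g == mu then term_coef p g else 0).

End Expansion.

(* Main.v *)
Require Import Defs.
From HB Require Import structures.
From mathcomp Require Import all_boot all_order all_algebra all_fingroup ring lra.
From Stdlib Require Import Classical.
Set Implicit Arguments. Unset Strict Implicit. Unset Printing Implicit Defensive.
Import Order.TTheory GRing.Theory Num.Theory.
Local Open Scope ring_scope.


Section CB.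
Variable R : comNzRingType.

Lemma expand_det r n (B : 'M[R]_(r,n)) (S : 'M[R]_(n,r)) :
  \det (B *m S) = \sum_(g : {ffun 'I_r -> 'I_n}) (\prod_i B i (g i)) * \det (rowsub g S).
Proof.
rewrite /determinant.
under eq_bigr => s _.
  rewrite (eq_bigr (fun i => \sum_k B i k * S k (s i))); last by move=> i _; rewrite mxE.
  rewrite bigA_distr_bigA big_distrr /=.
  over.
rewrite exchange_big /=; apply: eq_bigr => g _.
rewrite big_distrr /=; apply: eq_bigr => s _.
rewrite big_split /= mulrCA; congr (_ * (_ * _)).
by apply: eq_bigr => i _; rewrite mxE.
Qed.

Lemma det_rowcol_perm n (s : 'S_n) (M : 'M[R]_n) :
  \det (row_perm s (col_perm s M)) = \det M.
Proof.
rewrite row_permE col_permE !det_mulmx !det_perm odd_permV. idtac.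
by rewrite mulrCA -exprD -signr_odd oddD addbb mulr1.
Qed.

Lemma sum_mxsub r n (S : 'M[R]_(n,r)) (B : 'M[R]_(r,n)) :
  \sum_(g : {ffun 'I_r -> 'I_n}) \det (mxsub g g (S *m B)) = r`!%:R * \det (B *m S).
Proof.
under eq_bigr => g _ do rewrite mxsub_mul det_mulmx. rewrite /(determinant (colsub _ _)). under eq_bigr => g _ do rewrite big_distrr.
rewrite exchange_big /= mulr_natl -(card_Sn r) -sumr_const; apply: eq_bigr => t _.
pose h (g : {ffun 'I_r -> 'I_n}) : {ffun 'I_r -> 'I_n} := [ffun i => g (t^-1 i)%g].
pose h' (g : {ffun 'I_r -> 'I_n}) : {ffun 'I_r -> 'I_n} := [ffun i => g (t i)].
rewrite (reindex h); last first.
  exists h' => g _; apply/ffunP => i; rewrite !ffunE ?permK //.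
  by rewrite permKV.
rewrite expand_det; apply: eq_bigr => g _.
have -> : rowsub (h g) S = row_perm t^-1 (rowsub g S).
  by apply/matrixP => i j; rewrite !mxE ffunE.
rewrite row_permE det_mulmx det_perm odd_permV.
have -> : \prod_i colsub (h g) B i (t i) = \prod_i B i (g i).
  by apply: eq_bigr => i _; rewrite !mxE ffunE permK.
by rewrite mulrACA -exprD -signr_odd oddD addbb mul1r mulrC.
Qed.

Lemma cast_det n p q (E : p = q) (f : 'I_p -> 'I_n) (A : 'M[R]_n) :
  \det (mxsub (fun i => f (cast_ord (esym E) i)) (fun i => f (cast_ord (esym E) i)) A)
  = \det (mxsub f f A).
Proof. by case: q / E; congr (\det _); apply/matrixP => i j; rewrite !mxE !cast_ord_id. Qed.

Lemma sum_sets r n (A : 'M[R]_n) :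
  \sum_(g : {ffun 'I_r -> 'I_n}) \det (mxsub g g A) =
  r`!%:R * \sum_(I : {set 'I_n} | #|I| == r)
     \det (mxsub (fun a : 'I_#|I| => enum_val a) (fun a : 'I_#|I| => enum_val a) A).
Proof.
rewrite (partition_big (fun g : {ffun 'I_r -> 'I_n} => [set g i | i : 'I_r]) xpredT) //=.
rewrite (bigID (fun I : {set 'I_n} => #|I| == r)) /= [X in _ + X]big1 ?addr0; last first.
  move=> I HI; apply: big1 => g /eqP gI.
  have: ~~ injectiveb g.
    by apply: contra HI => /injectiveP inj; rewrite -gI card_imset // card_ord eqxx.
  move/injectivePn => [i [j ij gij]].
  by apply: (determinant_alternate ij) => k; rewrite !mxE gij.
rewrite mulr_sumr; apply: eq_bigr => I /eqP E.
pose e : 'I_r -> 'I_n := fun i => enum_val (cast_ord (esym E) i).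
have einj : injective e by move=> i j /enum_val_inj /cast_ord_inj.
pose h (s : 'S_r) : {ffun 'I_r -> 'I_n} := [ffun i => e (s i)].
have hinj : injective h.
  by move=> s s' /ffunP hs; apply/permP => i; apply: einj; have := hs i; rewrite !ffunE.
have eq_set : [pred g : {ffun 'I_r -> 'I_n} | [set g i | i : 'I_r] == I] =i h @: setT.
  move=> g; rewrite inE /=; apply/eqP/imsetP => [gI | [s _ ->]].
    have ginj : injective g.
      apply/injectiveP; apply: contraT => /injectivePn [i [j ij gij]].
      have : (#|[set g i | i : 'I_r]| < r)%N.
        have -> : [set g k | k : 'I_r] = g @: ([set: 'I_r] :\ i).
          apply/setP => y; apply/imsetP/imsetP => [[k _ ->]|[k _ ->]]; last by exists k.
          case: (eqVneq k i) => [->|ki]; first by exists j; rewrite // !inE eq_sym ij.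
          by exists k; rewrite // !inE ki.
        apply: leq_ltn_trans (leq_imset_card _ _) _.
        move: (cardsD1 i [set: 'I_r]); rewrite cardsT card_ord inE add1n => Er.
        by rewrite [X in (_ < X)%N]Er ltnSn.
      by rewrite gI E ltnn.
    have Hin : forall i, g i \in I by move=> i; rewrite -gI imset_f.
    pose s0 i := cast_ord E (enum_rank_in (Hin i) (g i)).
    have s0K : forall i, e (s0 i) = g i.
      by move=> i; rewrite /e /s0 cast_ordK enum_rankK_in.
    have s0inj : injective s0.
      by move=> i j sij; apply: ginj; rewrite -!s0K sij.
    exists (perm s0inj); rewrite // ; apply/ffunP => i; rewrite ffunE permE s0K //.
  apply/eqP; rewrite eqEcard; apply/andP; split.
    by apply/subsetP => y /imsetP [i _ ->]; rewrite ffunE /e enum_valP.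
  rewrite card_imset ?cardsT ?card_ord ?E //.
  by move=> i j; rewrite !ffunE => /einj /perm_inj.
rewrite (eq_bigl _ _ eq_set) big_imset /=; last by move=> ? ? _ _; apply: hinj.
have cst : forall s : 'S_r, \det (mxsub (h s) (h s) A) = \det (mxsub e e A).
  move=> s; rewrite -(det_rowcol_perm s (mxsub e e A)); congr (\det _).
  by apply/matrixP => i j; rewrite !mxE !ffunE.
rewrite (eq_bigr _ (fun s _ => cst s)) sumr_const cardsT card_Sn mulr_natl.
by rewrite /e cast_det.
Qed.
End CB.

Lemma sum_pm_det (R : numDomainType) n r (S : 'M[R]_(n,r)) (B : 'M[R]_(r,n)) :
  \sum_(I : {set 'I_n} | #|I| == r)
     \det (mxsub (fun a : 'I_#|I| => enum_val a) (fun a : 'I_#|I| => enum_val a) (S *m B))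
  = \det (B *m S).
Proof.
have := sum_mxsub S B; rewrite sum_sets; apply: mulfI.
by rewrite pnatr_eq0 -lt0n fact_gt0.
Qed.



Section FM.
Variable R : realFieldType.

Lemma sg_inv (x : R) : 0 < x -> Num.sg (x^-1 - 1) = - Num.sg (x - 1).
Proof.
move=> x0; have -> : x^-1 - 1 = (1 - x) * x^-1.
  by rewrite mulrBl mul1r mulfV ?gt_eqF.
by rewrite sgrM sgrV (gtr0_sg x0) mulr1 -sgrN opprB.
Qed.

Lemma sg_exp (x : R) m : 0 < x -> (0 < m)%N -> Num.sg (x ^+ m - 1) = Num.sg (x - 1).
Proof.
move=> x0 m0; have mn0 : m != 0%N by rewrite -lt0n.
case: (ltrgtP x 1) => h.
- rewrite !ltr0_sg ?subr_lt0 // exprn_ilt1 ?ltW //.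
- rewrite !gtr0_sg ?subr_gt0 // exprn_egt1 //.
- by rewrite h expr1n.
Qed.

Lemma sep (xs ys : seq R) : (forall x y, x \in xs -> y \in ys -> x < y) ->
  exists t, (forall x, x \in xs -> x < t) /\ (forall y, y \in ys -> t < y).
Proof.
have below : forall zs : seq R, exists t, forall y, y \in zs -> t < y.
  elim=> [|y zs [t Ht]]; first by exists 0.
  exists (Num.min t (y - 1)) => z; rewrite inE => /orP [/eqP ->|zin].
    by rewrite gt_min ltrBlDr ltrDl ltr01 orbT.
  by rewrite gt_min Ht.
have above : forall (x : R) (zs : seq R), (forall y, y \in zs -> x < y) ->
    exists t, x < t /\ forall y, y \in zs -> t < y.
  move=> x; elim=> [|y zs IH] H; first by exists (x + 1); split => //; rewrite ltrDl ltr01.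
  have [t [xt Ht]] : exists t, x < t /\ forall y, y \in zs -> t < y.
    by apply: IH => z zin; apply: H; rewrite inE zin orbT.
  have xy : x < y by apply: H; rewrite inE eqxx.
  exists (Num.min t ((x + y) / 2)); split.
    by rewrite lt_min xt /= midf_lt.
  move=> z; rewrite inE => /orP [/eqP ->|zin].
    by rewrite gt_min (midf_lt xy) orbT.
  by rewrite gt_min Ht.
elim: xs => [|x xs IH] H.
  by have [t Ht] := below ys; exists t; split.
have [t [Hx Hy]] : exists t, (forall x, x \in xs -> x < t) /\ (forall y, y \in ys -> t < y).
  by apply: IH => a b ain bin; apply: H; rewrite ?inE ?ain ?orbT.
case: (ltP x t) => xt.
  exists t; split => // z; rewrite inE => /orP [/eqP ->|//]; last exact: Hx.
  done.
have [t' [xt' Ht']] := above x ys (fun y yin => H x y (mem_head _ _) yin).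
exists t'; split => // z; rewrite inE => /orP [/eqP ->|zin] //.
by apply: lt_trans (Hx _ zin) _; apply: le_lt_trans xt xt'.
Qed.

Variable n : nat.
Variable r : 'I_n -> R.
Hypothesis rpos : forall i, 0 < r i.

Definition dot (a : {ffun 'I_n -> int}) (u : 'I_n -> R) := \sum_i (a i)%:~R * u i.
Definition pw (a : {ffun 'I_n -> int}) := \prod_i r i ^ (a i).
Definition negv (a : {ffun 'I_n -> int}) : {ffun 'I_n -> int} := [ffun i => - a i].
Definition comb (a b : {ffun 'I_n -> int}) (c d : nat) : {ffun 'I_n -> int} :=
  [ffun i => c%:Z * a i - d%:Z * b i].

Lemma pw_gt0 a : 0 < pw a.
Proof. by apply: prodr_gt0 => i _; apply: exprz_gt0. Qed.

Lemma pwN a : pw (negv a) = (pw a)^-1.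
Proof. by rewrite /pw -prodfV; apply: eq_bigr => i _; rewrite ffunE invr_expz. Qed.

Lemma dotN a u : dot (negv a) u = - dot a u.
Proof. by rewrite /dot -sumrN; apply: eq_bigr => i _; rewrite ffunE mulrNz mulNr. Qed.

Lemma unit_r i : r i \is a GRing.unit.
Proof. by rewrite unitfE gt_eqF. Qed.

Lemma pw_comb a b c d : pw (comb a b c d) = pw a ^+ c * (pw b ^+ d)^-1.
Proof.
rewrite /pw -!prodrXl -prodfV -big_split /=; apply: eq_bigr => i _.
rewrite ffunE exprzDr ?unit_r // -invr_expz.
by rewrite !exprnP !exprz_exp [(a i * _)%R]mulrC [(b i * _)%R]mulrC.
Qed.

Lemma dot_comb a b c d u : dot (comb a b c d) u = c%:R * dot a u - d%:R * dot b u.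
Proof.
rewrite /dot !mulr_sumr -sumrB; apply: eq_bigr => i _.
by rewrite ffunE intrD mulrNz !intrM -!pmulrn mulrBl !mulrA.
Qed.


Definition upd (u : 'I_n -> R) ik t := fun i => if i == ik then t else u i.

Lemma dot_upd a (u : 'I_n -> R) ik t :
  dot a (upd u ik t) = dot a u + (a ik)%:~R * (t - u ik).
Proof.
rewrite /dot (bigD1 ik) //= [in RHS](bigD1 ik) //= /upd eqxx.
rewrite (eq_bigr (fun i => (a i)%:~R * u i)); last by move=> i /negPf ->.
ring.
Qed.

Lemma FM k : (k <= n)%N -> forall P : seq {ffun 'I_n -> int},
  (forall a, a \in P -> forall i : 'I_n, (k <= i)%N -> a i = 0) ->
  exists u : 'I_n -> R, forall a, a \in P -> Num.sg (dot a u) = Num.sg (pw a - 1).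
Proof.
elim: k => [_|k IH kn] P HP.
  exists (fun _ => 0) => a aP.
  have a0 i : a i = 0 by apply: HP.
  rewrite /dot /pw big1 ?sgr0; last by move=> i _; rewrite mulr0.
  by rewrite big1 ?subrr ?sgr0 // => i _; rewrite a0 expr0z.
pose ik : 'I_n := Ordinal kn.
pose nrm (a : {ffun 'I_n -> int}) := if (0 < a ik) then a else negv a.
pose Q := map nrm (filter (fun a : {ffun 'I_n -> int} => a ik != 0) P).
pose P' := filter (fun a : {ffun 'I_n -> int} => a ik == 0) P ++
   [seq comb a b `|b ik|%N `|a ik|%N | a <- Q, b <- Q].
have Qpos : forall q, q \in Q -> 0 < q ik.
  move=> q /mapP [a]; rewrite mem_filter => /andP [a0 _] ->; rewrite /nrm.
  case: ifP => // /negbT; rewrite -leNgt => ale.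
  by rewrite ffunE oppr_gt0 lt_neqAle a0.
have Qzero : forall q, q \in Q -> forall i : 'I_n, (k < i)%N -> q i = 0.
  move=> q /mapP [a]; rewrite mem_filter => /andP [_ aP] -> i ki; rewrite /nrm.
  by case: ifP => _; rewrite ?ffunE HP ?oppr0.
have absE : forall q, q \in Q -> (`|q ik|%N : int) = q ik.
  by move=> q qQ; rewrite abszE gtr0_norm // Qpos.
have [u' Hu'] : exists u' : 'I_n -> R,
    forall a, a \in P' -> Num.sg (dot a u') = Num.sg (pw a - 1).
  apply: IH; first exact: ltnW.
  move=> a; rewrite mem_cat mem_filter => /orP [/andP [a0 aP] i ki|].
    case: (eqVneq i ik) => [-> //|ne]; first exact/eqP.
    apply: (HP _ aP i); rewrite ltn_neqAle ki andbT.
    by apply: contra ne => /eqP e; apply/eqP/val_inj.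
  case/allpairsP => [[a' b'] [/= aQ bQ ->]] i ki; rewrite ffunE.
  case: (eqVneq i ik) => [->|ne].
    by rewrite absE // absE // mulrC subrr.
  have ki' : (k < i)%N.
    rewrite ltn_neqAle ki andbT; apply: contra ne => /eqP e; exact/eqP/val_inj.
  by rewrite (Qzero _ aQ i ki') (Qzero _ bQ i ki') !mulr0 subrr.
pose L (q : {ffun 'I_n -> int}) := u' ik - dot q u' / (q ik)%:~R.
have qk0 : forall q, q \in Q -> (q ik)%:~R != 0 :> R.
  by move=> q qQ; rewrite intr_eq0 gt_eqF // Qpos.
have dotL : forall q, q \in Q -> dot q u' = (q ik)%:~R * (u' ik - L q).
  by move=> q qQ; rewrite /L opprB addrCA subrr addr0 mulrC divfK // qk0.
have HL : forall q, q \in Q -> forall t,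
    Num.sg (dot q (upd u' ik t)) = Num.sg (t - L q).
  move=> q qQ t; rewrite dot_upd dotL //.
  have -> : (q ik)%:~R * (u' ik - L q) + (q ik)%:~R * (t - u' ik) =
            (q ik)%:~R * (t - L q) :> R by ring.
  by rewrite sgrM gtr0_sg ?mul1r // ltr0z Qpos.
have Hpair : forall a b, a \in Q -> b \in Q ->
    Num.sg (L b - L a) = Num.sg (pw a ^+ `|b ik| - pw b ^+ `|a ik|).
  move=> a b aQ bQ.
  have inP' : comb a b `|b ik|%N `|a ik|%N \in P'.
    by rewrite mem_cat; apply/orP; right; apply/allpairsP; exists (a, b).
  have := Hu' _ inP'; rewrite dot_comb pw_comb !dotL //.
  have ea : (`|a ik|%:R : R) = (a ik)%:~R by rewrite -(absE a aQ) -pmulrn.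
  have eb : (`|b ik|%:R : R) = (b ik)%:~R by rewrite -(absE b bQ) -pmulrn.
  rewrite ea eb.
  have -> : (b ik)%:~R * ((a ik)%:~R * (u' ik - L a)) -
      (a ik)%:~R * ((b ik)%:~R * (u' ik - L b)) =
      ((a ik)%:~R * (b ik)%:~R) * (L b - L a) :> R by ring.
  rewrite sgrM gtr0_sg ?mul1r; last by rewrite mulr_gt0 // ltr0z Qpos.
  move=> ->.
  have pb0 : 0 < pw b ^+ `|a ik| by rewrite exprn_gt0 // pw_gt0.
  have -> : pw a ^+ `|b ik| / pw b ^+ `|a ik| - 1 =
     (pw a ^+ `|b ik| - pw b ^+ `|a ik|) / pw b ^+ `|a ik|.
    by rewrite mulrBl divff ?gt_eqF.
  by rewrite sgrM sgrV (gtr0_sg pb0) mulr1.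
have expP : forall q, q \in Q -> (0 < `|q ik|)%N.
  by move=> q qQ; rewrite absz_gt0 gt_eqF // Qpos.
have [t Ht] : exists t, forall q, q \in Q -> Num.sg (t - L q) = Num.sg (pw q - 1).
  case: (boolP (has (fun q => pw q == 1) Q)) => [/hasP [q0 q0Q /eqP q01]|].
    exists (L q0) => q qQ; rewrite Hpair // q01 expr1n sg_exp ?pw_gt0 ?(expP _ q0Q) //.
  move/hasPn => Hn.
  have Hsep : forall x y, x \in [seq L q | q <- Q & 1 < pw q] ->
      y \in [seq L q | q <- Q & pw q < 1] -> x < y.
    move=> x y xin yin.
    case/mapP: xin => a; rewrite mem_filter => /andP [pa aQ] ->.
    case/mapP: yin => b; rewrite mem_filter => /andP [pb bQ] ->.
    rewrite -subr_gt0 -sgr_cp0 Hpair // sgr_cp0 subr_gt0.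
    apply: (@lt_trans _ _ 1).
      by rewrite exprn_ilt1 ?ltW ?pw_gt0 // -lt0n expP.
    by rewrite exprn_egt1 // -lt0n expP.
  have [t [Hx Hy]] := sep Hsep.
  exists t => q qQ.
  case: (ltrgtP (pw q) 1) => h.
  - rewrite (ltr0_sg (x := pw q - 1)) ?subr_lt0 //; apply: ltr0_sg; rewrite subr_lt0.
    by apply: Hy; apply/mapP; exists q; rewrite // mem_filter h.
  - rewrite (gtr0_sg (x := pw q - 1)) ?subr_gt0 //; apply: gtr0_sg; rewrite subr_gt0.
    by apply: Hx; apply/mapP; exists q; rewrite // mem_filter h.
  - by move: (Hn q qQ); rewrite h eqxx.
exists (upd u' ik t) => a aP.
case: (eqVneq (a ik) 0) => [a0|a0].
  rewrite dot_upd a0 mulr0z mul0r addr0; apply: Hu'.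
  by rewrite mem_cat mem_filter a0 eqxx aP.
have qQ : nrm a \in Q by apply/mapP; exists a; rewrite // mem_filter a0.
move: (HL _ qQ t) (Ht _ qQ); rewrite /nrm; case: ifP => _ H1 H2.
  by rewrite H1 H2.
have -> : dot a (upd u' ik t) = - dot (negv a) (upd u' ik t) by rewrite dotN opprK.
by rewrite sgrN H1 H2 pwN sg_inv ?pw_gt0 // opprK.
Qed.
End FM.


Lemma prod_count (R : comNzRingType) p q (f : 'I_p -> 'I_q) (G : 'I_q -> R) :
  \prod_a G (f a) = \prod_j G j ^+ #|[set a | f a == j]|.
Proof.
rewrite (partition_big f xpredT) //=; apply: eq_bigr => j _.
rewrite (eq_bigr (fun _ => G j)); last by move=> a /eqP ->.
by rewrite prodr_const cardsE.
Qed.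

Section Exp.
Variables (R : rcfType) (n m : nat) (alpha beta : 'M[nat]_(n, m)).

Definition ev (mu : monomial n m) (v : 'cV[R]_m) (x : 'cV[R]_n) : R :=
  (\prod_j v j 0 ^+ mu.1 j) * \prod_l (x l 0)^-1 ^+ mu.2 l.

Lemma stoichE i j : stoich R alpha beta i j = (stoichZ alpha beta i j)%:~R.
Proof. by rewrite mxE /stoichZ intrB -!pmulrn. Qed.

Lemma pm_expand (I : {set 'I_n}) v x :
  principal_minor (- jacJ alpha beta v x) I =
  \sum_(p : 'S_#|I|) \sum_(g : {ffun 'I_#|I| -> 'I_m})
     (term_coef alpha beta p g)%:~R * ev (term_mon p g) v x.
Proof.
rewrite /principal_minor /determinant; apply: eq_bigr => p _.
rewrite (eq_bigr (fun a => \sum_j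
   (- (stoichZ alpha beta (enum_val a) j * (alpha (enum_val (p a)) j)%:Z))%:~R *
   (v j 0 * (x (enum_val (p a)) 0)^-1))); last first.
  move=> a _; rewrite !mxE -sumrN; apply: eq_bigr => j _.
  by rewrite stoichE mulrNz intrM -pmulrn mulNr !mulrA.
rewrite bigA_distr_bigA mulr_sumr; apply: eq_bigr => g _.
rewrite /term_coef /ev /term_mon /= big_split /= big_split /=.
rewrite (prod_count g (fun j => v j 0)) (prod_count (fun a => enum_val (p a)) (fun l => (x l 0)^-1)).
rewrite rmorphM /= rmorph_prod /= rmorphXn /= rmorphN1 -!mulrA.
congr (_ * (_ * (_ * _))); apply: eq_bigr => j _; rewrite ffunE //.
Qed.

Definition emb (f : ({ffun 'I_m -> 'I_n.+1} * {ffun 'I_n -> 'I_n.+1})%type) : monomial n m :=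
  ([ffun j => nat_of_ord (f.1 j)], [ffun l => nat_of_ord (f.2 l)]).

Definition Mons : seq (monomial n m) :=
  [seq emb f | f : ({ffun 'I_m -> 'I_n.+1} * {ffun 'I_n -> 'I_n.+1})%type].

Lemma Mons_uniq : uniq Mons.
Proof.
rewrite map_inj_uniq ?enum_uniq // => [[f1 f2] [g1 g2]] [/ffunP e1 /ffunP e2].
congr pair; apply/ffunP => i; apply: val_inj.
  by have := e1 i; rewrite !ffunE.
by have := e2 i; rewrite !ffunE.
Qed.

Lemma mon_in (I : {set 'I_n}) (p : 'S_#|I|) (g : {ffun 'I_#|I| -> 'I_m}) :
  term_mon p g \in Mons.
Proof.
have cI : forall (P : pred 'I_#|I|), (#|P| < n.+1)%N.
  move=> P; rewrite ltnS; apply: leq_trans (max_card _) _.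
  by rewrite card_ord; apply: leq_trans (max_card _) _; rewrite card_ord.
apply/mapP; exists ([ffun j => inord #|[set a | g a == j]|],
                   [ffun l => inord #|[set a | enum_val (p a) == l]|]); first by rewrite mem_enum.
by rewrite /emb /term_mon; congr pair; apply/ffunP => i; rewrite !ffunE /= inordK // cardsE.
Qed.

Lemma term_split c mu0 v x : mu0 \in Mons ->
  c%:~R * ev mu0 v x = \sum_(mu <- Mons) (if mu0 == mu then c else 0)%:~R * ev mu v x.
Proof.
move=> min; rewrite (bigD1_seq mu0) //= ?Mons_uniq // eqxx big1_seq ?addr0 //.
by move=> mu /andP [ne _]; rewrite eq_sym (negPf ne) mul0r.
Qed.

Lemma collect s v x : a_coef alpha beta s v x =
  \sum_(mu <- Mons) (a_poly_coef alpha beta s mu)%:~R * ev mu v x.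
Proof.
rewrite /a_coef /a_poly_coef.
transitivity (\sum_(I : {set 'I_n} | #|I| == s) \sum_(p : 'S_#|I|)
   \sum_(g : {ffun 'I_#|I| -> 'I_m}) \sum_(mu <- Mons)
     (if term_mon p g == mu then term_coef alpha beta p g else 0)%:~R * ev mu v x).
  apply: eq_bigr => I _; rewrite pm_expand; apply: eq_bigr => p _; apply: eq_bigr => g _.
  exact/term_split/mon_in.
under eq_bigr => I _ do under eq_bigr => p _ do rewrite exchange_big.
under eq_bigr => I _ do rewrite exchange_big.
rewrite exchange_big; apply: eq_bigr => mu _.
rewrite rmorph_sum big_distrl; apply: eq_bigr => I _.
rewrite rmorph_sum big_distrl; apply: eq_bigr => p _.
by rewrite rmorph_sum big_distrl.
Qed.

Lemma ev_gt0 mu v x : pos_vec v -> pos_vec x -> 0 < ev mu v x.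
Proof.
move=> pv px; apply: mulr_gt0; apply: prodr_gt0 => i _; apply: exprn_gt0 => //.
by rewrite invr_gt0.
Qed.

Lemma pos_all s : (forall mu, 0 <= a_poly_coef alpha beta s mu) ->
  forall (v1 v2 : 'cV[R]_m) (x1 x2 : 'cV[R]_n), pos_vec v1 -> pos_vec x1 -> pos_vec v2 -> pos_vec x2 ->
  a_coef alpha beta s v1 x1 != 0 -> 0 < a_coef alpha beta s v2 x2.
Proof.
move=> Hnn v1 v2 x1 x2 pv1 px1 pv2 px2; rewrite !collect => H1.
case: (boolP (has (fun mu => a_poly_coef alpha beta s mu != 0) Mons)) => [|/hasPn H0]; last first.
  by move: H1; rewrite big1_seq ?eqxx // => mu /andP [_ /H0]; rewrite negbK => /eqP ->; rewrite mul0r.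
case/hasP => mu0 min c0.
rewrite (bigD1_seq mu0) //= ?Mons_uniq //.
have t0 : 0 < (a_poly_coef alpha beta s mu0)%:~R * ev mu0 v2 x2.
  apply: mulr_gt0; last exact: ev_gt0.
  by rewrite ltr0z lt_neqAle eq_sym c0 Hnn.
have r0 : 0 <= \sum_(i <- Mons | i != mu0) (a_poly_coef alpha beta s i)%:~R * ev i v2 x2.
  by apply: sumr_ge0 => mu _; apply: mulr_ge0; [rewrite ler0z | exact/ltW/ev_gt0].
lra.
Qed.
End Exp.


Lemma sg_ratio (R : realFieldType) (a b : R) : 0 < b -> Num.sg (a / b - 1) = Num.sg (a - b).
Proof.
move=> b0; have -> : a / b - 1 = (a - b) / b by rewrite mulrBl divff ?gt_eqF.
by rewrite sgrM sgrV (gtr0_sg b0) mulr1.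
Qed.

Lemma same_sg_div (R : realFieldType) (a b : R) : Num.sg a = Num.sg b -> a != 0 -> 0 < a / b.
Proof.
move=> e a0; rewrite -sgr_cp0 sgrM sgrV -e -expr2 sqr_sg a0 //.
Qed.

Lemma proj_lemma (R : fieldType) n r p (S : 'M[R]_(n, r)) (A : 'M[R]_(n, p)) :
  S^T *m S = 1%:M -> (A^T <= S^T)%MS -> S *m S^T *m A = A.
Proof.
move=> StS /submxP [D HD].
have -> : A = S *m D^T by rewrite -[A]trmxK HD trmx_mul trmxK.
by rewrite -!mulmxA (mulmxA S^T) StS mul1mx.
Qed.

Theorem theorem4 (R : rcfType) (n m : nat) (alpha beta : 'M[nat]_(n, m))
  (* standing assumption: a positive conservation law *)
  (Hlambda : exists lambda : 'cV[R]_n,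
      pos_vec lambda /\ lambda^T *m stoich R alpha beta = 0)
  (* standing assumption: im J(v,x) = im N on the positive orthant *)
  (HJ : forall (v : 'cV[R]_m) (x : 'cV[R]_n), pos_vec v -> pos_vec x ->
      ((jacJ alpha beta v x)^T == (stoich R alpha beta)^T)%MS)
  (S : 'M[R]_(n, \rank (stoich R alpha beta)))
  (Z : 'M[R]_(n, n - \rank (stoich R alpha beta)))
  (HS : S^T *m S = 1%:M /\ (S^T == (stoich R alpha beta)^T)%MS)
  (HZ : Z^T *m Z = 1%:M /\ (Z^T == kermx (stoich R alpha beta))%MS)
  (k : 'cV[R]_m) (Hk : pos_vec k)
  (eta : 'cV[R]_(n - \rank (stoich R alpha beta)))
  (Hint : exists xi, pos_vec (S *m xi + Z *m eta))
  (Hbd : forall xi, nneg_vec (S *m xi + Z *m eta) ->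
      ~ pos_vec (S *m xi + Z *m eta) ->
      S^T *m stoich R alpha beta *m rates alpha k (S *m xi + Z *m eta) != 0)
  (Hmulti : exists xi1 xi2, xi1 != xi2 /\
      nneg_vec (S *m xi1 + Z *m eta) /\
      S^T *m stoich R alpha beta *m rates alpha k (S *m xi1 + Z *m eta) = 0 /\
      nneg_vec (S *m xi2 + Z *m eta) /\
      S^T *m stoich R alpha beta *m rates alpha k (S *m xi2 + Z *m eta) = 0)
  (Hreg : forall xi, nneg_vec (S *m xi + Z *m eta) ->
      S^T *m stoich R alpha beta *m rates alpha k (S *m xi + Z *m eta) = 0 ->
      a_coef alpha beta (\rank (stoich R alpha beta))
        (rates alpha k (S *m xi + Z *m eta)) (S *m xi + Z *m eta) != 0) :
  exists mu : monomial n m,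
    (a_poly_coef alpha beta (\rank (stoich R alpha beta)) mu < 0)%R.
Proof.
apply: NNPP => Hneg.
have Hnn : forall mu, 0 <= a_poly_coef alpha beta (\rank (stoich R alpha beta)) mu.
  by move=> mu; rewrite leNgt; apply/negP => h; apply: Hneg; exists mu.
case: Hmulti => xi1 [xi2 [neq [nn1 [g1 [nn2 g2]]]]].
pose x1 := S *m xi1 + Z *m eta.
pose x2 := S *m xi2 + Z *m eta.
have pos1 : pos_vec x1.
  by apply: NNPP => np; have := Hbd _ nn1 np; rewrite g1 eqxx.
have pos2 : pos_vec x2.
  by apply: NNPP => np; have := Hbd _ nn2 np; rewrite g2 eqxx.
have Ex12 : x1 - x2 = S *m (xi1 - xi2).
  by rewrite /x1 /x2 mulmxBr opprD addrACA subrr addr0.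
have g1' : S^T *m stoich R alpha beta *m rates alpha k x1 = 0 by exact: g1.
have g2' : S^T *m stoich R alpha beta *m rates alpha k x2 = 0 by exact: g2.
have areg : a_coef alpha beta (\rank (stoich R alpha beta)) (rates alpha k x1) x1 != 0.
  exact: Hreg _ nn1 g1.
clearbody x1 x2; clear nn1 nn2 g1 g2 Hreg Hbd.
have rates_pos : forall x, pos_vec x -> pos_vec (rates alpha k x).
  move=> x px j; rewrite mxE; apply: mulr_gt0 (Hk j) _.
  by apply: prodr_gt0 => i _; apply: exprn_gt0.
have Hpos : forall (v : 'cV[R]_m) (x : 'cV[R]_n), pos_vec v -> pos_vec x ->
    0 < a_coef alpha beta (\rank (stoich R alpha beta)) v x.
  move=> v x pv px.
  exact: (pos_all Hnn (rates_pos _ pos1) pos1 pv px areg).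
pose rr : 'I_n -> R := fun i => x1 i 0 / x2 i 0.
have rrpos : forall i, 0 < rr i by move=> i; rewrite divr_gt0.
pose e (i : 'I_n) : {ffun 'I_n -> int} := [ffun l => (l == i)%:Z].
pose acol (j : 'I_m) : {ffun 'I_n -> int} := [ffun l => (alpha l j)%:Z].
have [u Hu] : exists u : 'I_n -> R, forall a, a \in [seq e i | i : 'I_n] ++ [seq acol j | j : 'I_m] ->
    Num.sg (dot a u) = Num.sg (pw rr a - 1).
  apply: (@FM R n rr rrpos n (leqnn n)) => a _ i ni.
  by move: (ltn_ord i); rewrite ltnNge ni.
have Hu_e : forall i, Num.sg (u i) = Num.sg (x1 i 0 - x2 i 0).
  move=> i; have := Hu (e i); rewrite mem_cat map_f ?mem_enum // => /(_ isT).
  have E1 : dot (e i) u = u i.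
    rewrite /dot (bigD1 i) //= big1 ?addr0 => [|l li]; last by rewrite ffunE (negPf li) mulr0z mul0r.
    by rewrite ffunE eqxx mul1r.
  have E2 : pw rr (e i) = rr i.
    rewrite /pw (bigD1 i) //= big1 ?mulr1 => [|l li]; last by rewrite ffunE (negPf li) expr0z.
    by rewrite ffunE eqxx expr1z.
  by rewrite E1 E2 => ->; exact: sg_ratio.
have Hu_a : forall j, Num.sg (\sum_l (alpha l j)%:R * u l) =
    Num.sg (\prod_l x1 l 0 ^+ alpha l j - \prod_l x2 l 0 ^+ alpha l j).
  move=> j; have := Hu (acol j); rewrite mem_cat map_f ?mem_enum ?orbT // => /(_ isT).
  have -> : dot (acol j) u = \sum_l (alpha l j)%:R * u l.
    by apply: eq_bigr => l _; rewrite ffunE -pmulrn.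
  have P2 : 0 < \prod_l x2 l 0 ^+ alpha l j by apply: prodr_gt0 => l _; apply: exprn_gt0.
  move=> ->; rewrite /pw -(sg_ratio (\prod_l x1 l 0 ^+ alpha l j) P2).
  congr (Num.sg (_ - 1)); rewrite -prodfV -big_split /=; apply: eq_bigr => l _.
  by rewrite ffunE -exprnP exprMn exprVn.
pose w : 'cV[R]_n := \col_i (if x1 i 0 == x2 i 0 then 1 else (x1 i 0 - x2 i 0) / u i).
have wpos : pos_vec w.
  move=> i; rewrite /w mxE; case: ifP => [_|/eqP ne]; first exact: ltr01.
  by apply: same_sg_div; [rewrite Hu_e | rewrite subr_eq0; apply/eqP].
have zw : forall i, (x1 i 0 - x2 i 0) / w i 0 = u i.
  move=> i; rewrite /w mxE; case: ifP => [/eqP ex|/eqP ne].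
    rewrite ex subrr mul0r; have := Hu_e i; rewrite ex subrr sgr0 => /eqP.
    by rewrite sgr_eq0 => /eqP ->.
  have u0 : u i != 0.
    apply/negP => /eqP u0; have := Hu_e i; rewrite u0 sgr0 => /esym/eqP.
    by rewrite sgr_eq0 subr_eq0 => /eqP.
  by rewrite invf_div mulrCA divff ?mulr1 // subr_eq0; apply/eqP.
pose D (j : 'I_m) := \sum_l (alpha l j)%:R * u l.
pose E (j : 'I_m) := \prod_l x1 l 0 ^+ alpha l j - \prod_l x2 l 0 ^+ alpha l j.
pose c (j : 'I_m) := if D j == 0 then 1 else E j / D j.
pose v' : 'cV[R]_m := \col_j (k j 0 * c j).
have ED0 : forall j, D j = 0 -> E j = 0.
  by move=> j D0; apply/eqP; rewrite -sgr_eq0 -Hu_a -/(D j) D0 sgr0.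
have vpos : pos_vec v'.
  move=> j; rewrite /v' mxE; apply: mulr_gt0 (Hk j) _; rewrite /c; case: ifP => [_|/eqP ne]; first exact: ltr01.
  apply: same_sg_div; first by rewrite Hu_a.
  by apply/eqP => E0; apply: ne; apply/eqP; rewrite -sgr_eq0 /D Hu_a -/(E j) E0 sgr0.
have vD : forall j, v' j 0 * D j = k j 0 * E j.
  move=> j; rewrite /v' mxE /c; case: ifP => [/eqP D0|/eqP ne]; first by rewrite D0 ED0 // !mulr0.
  by rewrite -mulrA divfK //; apply/eqP.
clearbody w v'.
have Jz : jacJ alpha beta v' w *m (x1 - x2) =
    stoich R alpha beta *m (rates alpha k x1 - rates alpha k x2).
  apply/matrixP => i o; rewrite !mxE.
  under eq_bigr => l _ do rewrite !mxE big_distrl.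
  rewrite exchange_big; apply: eq_bigr => j _ /=.
  rewrite (ord1 o) !mxE -mulrBr -vD /D mulr_sumr mulr_sumr.
  apply: eq_bigr => l _; rewrite -zw; ring.
case: HS => StS /andP [_ NsubS].
have Nv : forall x, S^T *m stoich R alpha beta *m rates alpha k x = 0 ->
    stoich R alpha beta *m rates alpha k x = 0.
  move=> x gx; rewrite -(proj_lemma StS NsubS) -!mulmxA.
  by rewrite [S^T *m (_ *m _)]mulmxA gx mulmx0.
have JN : ((jacJ alpha beta v' w)^T <= S^T)%MS.
  by case/andP: (HJ _ _ vpos wpos) => JsubN _; apply: submx_trans JsubN NsubS.
have JS := proj_lemma StS JN.
have Jz0 : jacJ alpha beta v' w *m (S *m (xi1 - xi2)) = 0.
  by rewrite -Ex12 Jz mulmxBr (Nv _ g1') (Nv _ g2') subrr.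
have negJ : - jacJ alpha beta v' w = S *m (S^T *m - jacJ alpha beta v' w).
  by rewrite !mulmxN mulmxA JS.
have a0 : a_coef alpha beta (\rank (stoich R alpha beta)) v' w = 0.
  rewrite /a_coef /principal_minor negJ sum_pm_det.
  apply/eqP; rewrite -det_tr; apply/det0P; exists (xi1 - xi2)^T.
    apply: contra neq => /eqP h; rewrite -subr_eq0 -[xi1 - xi2]trmxK h trmx0 //.
  by rewrite -trmx_mul -!mulmxA mulNmx Jz0 oppr0 mulmx0 trmx0.
by have := Hpos _ _ vpos wpos; rewrite a0 ltxx.
Qed.
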